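(* Fix $t\in(0,1)$ and let $A\in\{0,1\}^{n\times n}$. Suppose $\widehat{Y}$ is the unique optimal solution of the convex program $$\max_{Y\in\mathbb{R}^{n\times n}}\ c_{A}\sum_{(i,j):a_{ij}=1}y_{ij}-c_{A^c}\sum_{(i,j):a_{ij}=0}y_{ij}-48\sqrt{n}\,\|Y\|_*\quad\text{s.t. } 0\le y_{ij}\le 1\ \ \forall i,j,$$ with input $A$, where $c_{A}=\sqrt{(1-t)/t}$ and $c_{A^c}=\sqrt{t/(1-t)}$. Let $\widetilde{A}\in\{0,1\}^{n\times n}$ be obtained from $A$ by (a) choosing some pairs $(i,j)$ with $\widehat{y}_{ij}=1$ and $a_{ij}=0$ and setting $\widetilde{a}_{ij}=1$, and (b) choosing some pairs $(i,j)$ with $\widehat{y}_{ij}=0$ and $a_{ij}=1$ and setting $\widetilde{a}_{ij}=0$ (all other entries unchanged). Then $\widehat{Y}$ is also the unique optimal solution of the same program with $\widetilde{A}$ as input.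
   Context: $\|Y\|_*$ denotes the nuclear norm (sum of singular values). The sums run over ordered pairs $(i,j)\in\{1,\dots,n\}^2$, including diagonal pairs. The paper states this lemma in the setting of the stochastic blockmodel with in-cluster edge density $p$ larger than cross-cluster density $q$ ($p>q$), although the program itself depends only on $A$ and $t$. *)

(* Defs.v *)
From HB Require Import structures.
From mathcomp Require Import all_boot all_order all_algebra.
From mathcomp Require Import boolp classical_sets reals.
Set Implicit Arguments. Unset Strict Implicit. Unset Printing Implicit Defensive.
Import Order.TTheory GRing.Theory Num.Theory.
Local Open Scope ring_scope.

Definition singular_values {R : realType} {n : nat} (Y : 'M[R]_n) (s : seq R) : Prop :=
  [/\ size s = n, all (fun x => 0 <= x) s &
      char_poly (Y^T *m Y) = \prod_(x <- s) ('X - (x ^+ 2)%:P)].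

Definition nuclear_norm {R : realType} {n : nat} (Y : 'M[R]_n) : R :=
  \sum_(x <- xget [::] (singular_values Y)) x.

Definition feasible {R : realType} {n : nat} (Y : 'M[R]_n) : Prop :=
  forall i j, 0 <= Y i j <= 1.

Definition objective {R : realType} (t : R) {n : nat} (A : 'M[bool]_n) (Y : 'M[R]_n) : R :=
  Num.sqrt ((1 - t) / t) * (\sum_(i < n) \sum_(j < n | A i j) Y i j)
  - Num.sqrt (t / (1 - t)) * (\sum_(i < n) \sum_(j < n | ~~ A i j) Y i j)
  - 48 * Num.sqrt (n%:R) * nuclear_norm Y.

Definition unique_optimum {R : realType} (t : R) {n : nat} (A : 'M[bool]_n) (Yh : 'M[R]_n) : Prop :=
  feasible Yh /\
  forall Y : 'M[R]_n, feasible Y -> Y <> Yh -> objective t A Y < objective t A Yh.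

(* Main.v *)
Require Import Defs.
From HB Require Import structures.
From mathcomp Require Import all_boot all_order all_algebra.
From mathcomp Require Import boolp classical_sets reals.
From mathcomp Require Import lra.
Import Order.TTheory GRing.Theory Num.Theory.
Local Open Scope ring_scope.

Definition wt {R : realType} (t : R) {n : nat} (A : 'M[bool]_n) i j : R :=
  if A i j then Num.sqrt ((1 - t) / t) else - Num.sqrt (t / (1 - t)).

Lemma objE {R : realType} (t : R) n (A : 'M[bool]_n) (Y : 'M[R]_n) :
  objective t A Y = \sum_(i < n) \sum_(j < n) wt t A i j * Y i j
                    - 48 * Num.sqrt (n%:R) * nuclear_norm Y.
Proof.
rewrite /objective; congr (_ - _).
rewrite !mulr_sumr. rewrite -sumrN -big_split /=. apply: eq_bigr => i _.
rewrite !big_mkcond /= !mulr_sumr !big_mkcond /=  -sumrN [X in _ + X]big_mkcond -big_split /=.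
apply: eq_bigr => j _; rewrite /wt; case: (A i j) => /=;
  by rewrite ?mulr0 ?oppr0 ?addr0 ?add0r ?mulNr.
Qed.

Theorem lemma1 (R : realType) (t : R) (n : nat) (A At : 'M[bool]_n) (Yh : 'M[R]_n) :
  0 < t < 1 ->
  unique_optimum t A Yh ->
  (forall i j, At i j <> A i j ->
     (A i j = false /\ Yh i j = 1 /\ At i j = true) \/
     (A i j = true /\ Yh i j = 0 /\ At i j = false)) ->
  unique_optimum t At Yh.
Proof.
move=> _ [fh opt] H; split => // Y fY nY.
have key : objective t At Y - objective t At Yh <= objective t A Y - objective t A Yh.
  rewrite !objE.
  have E : forall B : 'M[bool]_n,
    (\sum_(i < n) \sum_(j < n) wt t B i j * Y i j - 48 * Num.sqrt n%:R * nuclear_norm Y) -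
    (\sum_(i < n) \sum_(j < n) wt t B i j * Yh i j - 48 * Num.sqrt n%:R * nuclear_norm Yh)
    = \sum_(i < n) \sum_(j < n) wt t B i j * (Y i j - Yh i j)
      - 48 * Num.sqrt n%:R * nuclear_norm Y + 48 * Num.sqrt n%:R * nuclear_norm Yh.
    move=> B.
    have -> : \sum_(i < n) \sum_(j < n) wt t B i j * (Y i j - Yh i j) =
      \sum_(i < n) \sum_(j < n) wt t B i j * Y i j - \sum_(i < n) \sum_(j < n) wt t B i j * Yh i j.
      rewrite -sumrB; apply: eq_bigr => i _; rewrite -sumrB; apply: eq_bigr => j _.
      by rewrite mulrBr.
    move: (\sum_(i < n) \sum_(j < n) wt t B i j * Y i j).
    move: (\sum_(i < n) \sum_(j < n) wt t B i j * Yh i j).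
    move: (48 * Num.sqrt n%:R * nuclear_norm Y) (48 * Num.sqrt n%:R * nuclear_norm Yh).
    by move=> a b c d; lra.
  rewrite !E lerD2r lerD2r; apply: ler_sum => i _; apply: ler_sum => j _.
  have [e|ne] := eqVneq (At i j) (A i j); first by rewrite /wt e.
  have s1 := sqrtr_ge0 ((1 - t) / t); have s2 := sqrtr_ge0 (t / (1 - t)).
  have [/andP[y0 y1] _] := (fY i j, fh i j).
  case: (H i j (elimN eqP ne)) => [[a [y b]]|[a [y b]]]; rewrite /wt a b y.
    rewrite -subr_ge0 -mulrBl; apply: mulr_le0; lra.
  rewrite -subr_ge0 -mulrBl subr0; apply: mulr_ge0; lra.
have := opt Y fY nY; rewrite -subr_lt0 => h1.
by rewrite -subr_lt0; apply: le_lt_trans key h1.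
Qed.
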